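(* Let $x\in S_n$ with $x_i>x_{i+1}$, and let $y$ be obtained from $x$ by transposing $x_i$ and $x_{i+1}$, so that $x$ covers $y$ in the weak order. Then a lattice congruence $\Theta$ on $S_n$ contracts the edge $y\lessdot x$ (i.e. $x\equiv y$) if and only if it contracts the join-irreducible $\lambda(x,i)$.
   Context: $S_n$: permutations of $[n]$ in one-line notation with the right weak order ($x\le y$ iff the set of inverted value pairs of $x$ is contained in that of $y$), a lattice. A join-irreducible $\gamma$ covers exactly one element $\gamma_*$; $\Theta$ contracts $\gamma$ if $\gamma\equiv\gamma_*$. For $x$ with $x_i>x_{i+1}$, set $A(x,i)=\{x_j:1\le j\le i,\ x_j>x_i\}\cup\{x_j:i+1\le j\le n,\ x_j\ge x_{i+1}\}$, and let $\lambda(x,i)$ be the permutation consisting of the elements of $[n]\setminus A(x,i)$ in increasing order followed by the elements of $A(x,i)$ in increasing order; it is join-irreducible. *)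

(* Defs.v *)
(* Permutations of [n] are {perm 'I_n}, values and positions
   0-indexed; one-line notation of x is (x 0, x 1, ..., x (n-1)). *)
From mathcomp Require Import all_boot all_order all_fingroup.
Set Implicit Arguments. Unset Strict Implicit. Unset Printing Implicit Defensive.
Local Open Scope group_scope.

Section WeakOrder.
Variable n : nat.
Notation Sn := {perm 'I_n}.

Definition inv_set (x : Sn) : {set 'I_n * 'I_n} :=
  [set p : 'I_n * 'I_n | (p.1 < p.2)%N && (x^-1 p.2 < x^-1 p.1)%N].

(* right weak order *)
Definition wle (x y : Sn) : Prop := inv_set x \subset inv_set y.
Definition wlt (x y : Sn) : Prop := wle x y /\ x <> y.

Definition covers (x y : Sn) : Prop :=
  wlt y x /\ ~ (exists z, wlt y z /\ wlt z x).

Definition is_join (a b c : Sn) : Prop :=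
  wle a c /\ wle b c /\ forall d, wle a d -> wle b d -> wle c d.
Definition is_meet (a b c : Sn) : Prop :=
  wle c a /\ wle c b /\ forall d, wle d a -> wle d b -> wle d c.

Definition lattice_congruence (Th : Sn -> Sn -> Prop) : Prop :=
  [/\ (forall a, Th a a), (forall a b, Th a b -> Th b a),
      (forall a b c, Th a b -> Th b c -> Th a c),
      (forall a b c ja jb, Th a b -> is_join a c ja -> is_join b c jb -> Th ja jb)
    & (forall a b c ma mb, Th a b -> is_meet a c ma -> is_meet b c mb -> Th ma mb)].

(* Theta contracts the join-irreducible gamma: gamma == gamma_* , where
   gamma_* is the (unique) element covered by gamma *)
Definition contracts (Th : Sn -> Sn -> Prop) (g : Sn) : Prop :=
  exists g', covers g g' /\ Th g g'.

(* A(x,i); here i is a position and j the next position (j = i+1) *)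
Definition Aset (x : Sn) (i j : 'I_n) : {set 'I_n} :=
  x @: [set k : 'I_n | ((k <= i)%N && (x i < x k)%N) || ((j <= k)%N && (x j <= x k)%N)].

(* one-line notation of lambda(x,i): complement of A increasing, then A increasing *)
Definition lam_seq (x : Sn) (i j : 'I_n) : seq 'I_n :=
  [seq v <- enum 'I_n | v \notin Aset x i j] ++ [seq v <- enum 'I_n | v \in Aset x i j].

Definition lam_fun (x : Sn) (i j : 'I_n) (p : 'I_n) : 'I_n := nth p (lam_seq x i j) p.

Lemma lam_seq_perm x i j : perm_eq (lam_seq x i j) (enum 'I_n).
Proof. by rewrite /lam_seq perm_catC perm_filterC. Qed.

Lemma lam_fun_inj x i j : injective (lam_fun x i j).
Proof.
move=> p q; rewrite /lam_fun.
have hs : size (lam_seq x i j) = n by rewrite (perm_size (lam_seq_perm x i j)) size_enum_ord.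
have hu : uniq (lam_seq x i j) by rewrite (perm_uniq (lam_seq_perm x i j)) enum_uniq.
rewrite (set_nth_default p q); last by rewrite hs ltn_ord.
move/eqP; rewrite nth_uniq ?hs ?ltn_ord //; move/eqP; exact: val_inj.
Qed.

Definition lambda (x : Sn) (i j : 'I_n) : Sn := perm (@lam_fun_inj x i j).

End WeakOrder.

(* Main.v *)
Require Import Defs.
From mathcomp Require Import all_boot all_order all_fingroup zify.
Set Implicit Arguments. Unset Strict Implicit. Unset Printing Implicit Defensive.

Section Aux.
Local Open Scope group_scope.
Variable n : nat.
Notation Sn := {perm 'I_n}.

Lemma inv_setP (x : Sn) a b :
  ((a,b) \in inv_set x) = (a < b)%N && (x^-1 b < x^-1 a)%N.
Proof. by rewrite inE. Qed.

Lemma card_lt_ord (k : nat) (hk : (k <= n)%N) :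
  #|[set m : 'I_n | (m < k)%N]| = k.
Proof.
have -> : [set m : 'I_n | (m < k)%N] = (widen_ord hk) @: [set: 'I_k].
  apply/setP=> m; rewrite inE; apply/idP/imsetP.
    by move=> mk; exists (Ordinal mk); rewrite ?inE //; apply: val_inj.
  by case=> m' _ ->; rewrite /= ltn_ord.
rewrite card_imset ?cardsT ?card_ord //.
by move=> a b /(congr1 val) /= /val_inj.
Qed.

Lemma pos_card (f : Sn) v : val (f v) = #|[set u | (f u < f v)%N]|.
Proof.
have -> : [set u | (f u < f v)%N] = f @^-1: [set m : 'I_n | (m < f v)%N].
  by apply/setP=> u; rewrite !inE.
rewrite card_preimset; last exact: perm_inj.
by rewrite card_lt_ord // ltnW.
Qed.

Lemma inv_inj (x y : Sn) : inv_set x = inv_set y -> x = y.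
Proof.
move=> e.
have hb : forall u v, (x^-1 u < x^-1 v)%N = (y^-1 u < y^-1 v)%N.
  move=> u v.
  case: (ltngtP u v) => [uv|vu|/val_inj ->]; last by rewrite !ltnn.
  - have : ((u,v) \in inv_set x) = ((u,v) \in inv_set y) by rewrite e.
    rewrite !inv_setP uv /=.
    have nx : x^-1 u != x^-1 v by rewrite (inj_eq perm_inj) -val_eqE /=; lia.
    have ny : y^-1 u != y^-1 v by rewrite (inj_eq perm_inj) -val_eqE /=; lia.
    move: nx ny; rewrite -!val_eqE /= => nx ny; lia.
  - have : ((v,u) \in inv_set x) = ((v,u) \in inv_set y) by rewrite e.
    rewrite !inv_setP vu /=.
    by [].
have : x^-1 = y^-1.
  apply/permP=> v; apply: val_inj; rewrite pos_card [RHS]pos_card.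
  by apply: eq_card => u; rewrite !inE hb.
by move/(congr1 (fun s => s^-1)); rewrite !invgK.
Qed.

Lemma tperm_val (i j u : 'I_n) : nat_of_ord (tperm i j u) =
  if nat_of_ord u == nat_of_ord i then nat_of_ord j
  else if nat_of_ord u == nat_of_ord j then nat_of_ord i else nat_of_ord u.
Proof.
by case: tpermP => [->|->|/eqP h1 /eqP h2]; rewrite ?eqxx //;
  [case: eqP => // /val_inj -> | rewrite val_eqE (negbTE h1) val_eqE (negbTE h2)].
Qed.

Lemma tperm_lt (i j u v : 'I_n) : nat_of_ord j = (nat_of_ord i).+1 ->
  (tperm i j u < tperm i j v)%N =
  if (u == i) && (v == j) then false
  else if (u == j) && (v == i) then true else (u < v)%N.
Proof.
move=> hj; rewrite !tperm_val -!val_eqE /=.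
by repeat (case: eqP => ?); rewrite /=; lia.
Qed.

Lemma swap_inv (z w : Sn) (i j : 'I_n) : nat_of_ord j = (nat_of_ord i).+1 ->
  (z j < z i)%N -> (forall k, w k = z (tperm i j k)) ->
  (forall a b, ((a,b) \in inv_set w) = ((a,b) \in inv_set z) && ((a,b) != (z j, z i)))
  /\ ((z j, z i) \in inv_set z).
Proof.
move=> hj hd hw.
have ew : w = tperm i j * z by apply/permP=> k; rewrite permM hw.
split; last by rewrite inv_setP !permK hd /=; lia.
move=> a b; rewrite !inv_setP ew invMg !permM tpermV (@tperm_lt i j (z^-1 b) (z^-1 a) hj).
have e : forall v k, (z^-1 v == k) = (v == z k).
  by move=> v k; apply/eqP/eqP=> [<-|->]; rewrite ?permKV ?permK.
rewrite !e xpair_eqE.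
case: (b =P z i) => [->|nb]; case: (a =P z j) => [->|na]; rewrite /= ?permK ?andbT ?andbF //=.
- case: (z i =P z j) => [/perm_inj/(congr1 val) /= h|//]; lia.
- case: (z j =P z i) => [/perm_inj/(congr1 val) /= h|]; [lia | by rewrite andbF].
- case: (b =P z j) => [->|nb2]; case: (a =P z i) => [->|na2]; rewrite /= ?permK ?andbT ?andbF //=.
  by rewrite ltnNge ltnW.
Qed.

End Aux.

Section Lam.
Local Open Scope group_scope.
Variables (n : nat) (x : {perm 'I_n}) (i j : 'I_n).
Hypothesis hj : nat_of_ord j = (nat_of_ord i).+1.
Hypothesis hdesc : (x j < x i)%N.

Lemma memA v : (v \in Aset x i j) =
  ((x^-1 v <= i)%N && (x i < v)%N) || ((j <= x^-1 v)%N && (x j <= v)%N).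
Proof.
by rewrite /Aset -{1}(permKV x v) mem_imset ?inE ?permKV //; exact: perm_inj.
Qed.

Lemma lam_invE v : nat_of_ord ((lambda x i j)^-1 v) = index v (lam_seq x i j).
Proof.
have hs : size (lam_seq x i j) = n.
  by rewrite (perm_size (lam_seq_perm x i j)) size_enum_ord.
have hv : v \in lam_seq x i j by rewrite (perm_mem (lam_seq_perm x i j)) mem_enum.
have hk : (index v (lam_seq x i j) < n)%N by rewrite -[X in (_ < X)%N]hs index_mem.
have e : lambda x i j (Ordinal hk) = v.
  by rewrite /lambda permE /lam_fun /= nth_index.
by rewrite -{1}e permK.
Qed.

Lemma sorted_enum_ord : sorted (fun a b : 'I_n => (a < b)%N) (enum 'I_n).
Proof. by have := iota_ltn_sorted 0 n; rewrite -val_enum_ord sorted_map. Qed.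

Lemma sorted_index (P : pred 'I_n) a b :
  a \in filter P (enum 'I_n) -> b \in filter P (enum 'I_n) ->
  (index a (filter P (enum 'I_n)) < index b (filter P (enum 'I_n)))%N = (a < b)%N.
Proof.
set fs := filter P (enum 'I_n).
have so : sorted (fun a b : 'I_n => (a < b)%N) fs.
  by apply: sorted_filter; [move=> ? ? ?; exact: ltn_trans | exact: sorted_enum_ord].
have tr : transitive (fun a b : 'I_n => (a < b)%N) by move=> ? ? ?; exact: ltn_trans.
move=> ha hb; apply/idP/idP; first exact: (sorted_ltn_index tr so).
move=> ab; rewrite ltnNge leq_eqVlt; apply/negP; case/orP => [/eqP h|h].
  have : a = b by rewrite -(nth_index a ha) -h nth_index.
  by move=> eab; rewrite eab ltnn in ab.
have := sorted_ltn_index tr so _ _ hb ha h; rewrite /=; lia.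
Qed.

Lemma lam_lt a b : ((lambda x i j)^-1 a < (lambda x i j)^-1 b)%N =
  if a \in Aset x i j then (b \in Aset x i j) && (a < b)%N
  else (b \in Aset x i j) || (a < b)%N.
Proof.
have m : forall (P : pred 'I_n) v, (v \in filter P (enum 'I_n)) = P v.
  by move=> P v; rewrite mem_filter mem_enum andbT.
rewrite !lam_invE /lam_seq !index_cat !m /=.
case: (boolP (a \in Aset x i j)) => ha; case: (boolP (b \in Aset x i j)) => hb /=.
- by rewrite ltn_add2l sorted_index // m.
- have := index_mem b [seq v <- enum 'I_n | v \notin Aset x i j].
  rewrite m hb /= => h; lia.
- have := index_mem a [seq v <- enum 'I_n | v \notin Aset x i j].
  rewrite m ha /= => h; lia.
- by rewrite sorted_index // m.
Qed.

Lemma inv_lam a b : ((a,b) \in inv_set (lambda x i j)) =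
  [&& (a < b)%N, a \in Aset x i j & b \notin Aset x i j].
Proof.
rewrite inv_setP lam_lt.
by case: (b \in Aset x i j); case: (a \in Aset x i j) => /=; lia.
Qed.

Lemma pA : x j \in Aset x i j.
Proof. by rewrite memA permK !leqnn orbT. Qed.

Lemma qA : x i \notin Aset x i j.
Proof. rewrite memA permK; lia. Qed.

Lemma minA a : a \in Aset x i j -> (x j <= a)%N.
Proof. rewrite memA; lia. Qed.

Lemma maxC b : b \notin Aset x i j -> (b <= x i)%N.
Proof. rewrite memA; lia. Qed.

Lemma lam_le_x a b : (a,b) \in inv_set (lambda x i j) -> (a,b) \in inv_set x.
Proof. rewrite inv_lam inv_setP !memA; lia. Qed.

Lemma cd : nat_of_ord ((lambda x i j)^-1 (x j)) = ((lambda x i j)^-1 (x i)).+1.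
Proof.
set lam := lambda x i j.
have cltd : ((lam^-1 (x i)) < (lam^-1 (x j)))%N.
  by rewrite lam_lt (negbTE qA) pA.
apply/eqP; rewrite eqn_leq cltd andbT leqNgt; apply/negP => h.
have hk : ((lam^-1 (x i)).+1 < n)%N by have := ltn_ord (lam^-1 (x j)); lia.
set k := Ordinal hk.
have ek : lam^-1 (lam k) = k by rewrite permK.
case: (boolP (lam k \in Aset x i j)) => hv.
- have := lam_lt (lam k) (x j); rewrite hv pA ek /= => e.
  have : (k < lam^-1 (x j))%N by rewrite /=.
  rewrite e; have := minA hv; lia.
- have := lam_lt (x i) (lam k); rewrite (negbTE qA) (negbTE hv) ek /= => e.
  have : (lam^-1 (x i) < k)%N by rewrite /=.
  rewrite e; have := maxC hv; lia.
Qed.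

Definition lamS := tperm ((lambda x i j)^-1 (x i)) ((lambda x i j)^-1 (x j)) * lambda x i j.

Lemma inv_lamS :
  (forall a b, ((a,b) \in inv_set lamS) =
     ((a,b) \in inv_set (lambda x i j)) && ((a,b) != (x j, x i)))
  /\ ((x j, x i) \in inv_set (lambda x i j)).
Proof.
have := @swap_inv n (lambda x i j) lamS _ _ cd.
rewrite !permKV => H; apply: H => //.
by move=> k; rewrite /lamS permM.
Qed.

End Lam.

Unset Implicit Arguments.
Theorem proposition6p4 (n : nat) (x y : {perm 'I_n}) (i j : 'I_n)
  (hj : nat_of_ord j = (nat_of_ord i).+1)
  (hdesc : (x j < x i)%N)
  (hy : forall k : 'I_n, y k = x (tperm i j k))
  (Th : {perm 'I_n} -> {perm 'I_n} -> Prop)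
  (hTh : lattice_congruence Th) :
  Th x y <-> contracts Th (lambda x i j).
Proof.
case: hTh => refl sym tr hjoin hmeet.
have [hS hP] := inv_lamS hj hdesc.
have [hY hPx] := swap_inv hj hdesc hy.
set lam := lambda x i j in hS hP *.
set ls := lamS x i j in hS *.
set P := (x j, x i) in hS hP hY hPx.
have hS' : forall p, (p \in inv_set ls) = (p \in inv_set lam) && (p != P) by case.
have hY' : forall p, (p \in inv_set y) = (p \in inv_set x) && (p != P) by case.
have lx : forall p, p \in inv_set lam -> p \in inv_set x.
  by case=> a b; exact: lam_le_x.
have ji : forall g, wle g lam -> P \in inv_set g -> inv_set g = inv_set lam.
  move=> g hg hPg; apply/eqP; rewrite eqEsubset hg /=; apply/subsetP => [[a b]].
  rewrite inv_lam // => /and3P[ab ha hb].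
  rewrite inv_setP ab /=.
  have gqp : ((g^-1)%g (x i) < (g^-1)%g (x j))%N by move: hPg; rewrite inv_setP => /andP[].
  have h1 : ((g^-1)%g b <= (g^-1)%g (x i))%N.
    case: (b =P x i) => [->//|nb].
    have bq : (b < x i)%N.
      have := maxC hj hdesc hb; rewrite leq_eqVlt => /orP[/eqP /val_inj e|//].
      by case: nb.
    have : (b, x i) \notin inv_set g.
      apply/negP => /(subsetP hg); rewrite inv_lam // (negbTE hb) /=; by rewrite andbF.
    rewrite inv_setP bq /= -leqNgt; done.
  have h2 : ((g^-1)%g (x j) <= (g^-1)%g a)%N.
    case: (a =P x j) => [->//|na].
    have pa : (x j < a)%N.
      have := minA hj hdesc ha; rewrite leq_eqVlt => /orP[/eqP /val_inj e|//].
      by case: na.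
    have : (x j, a) \notin inv_set g.
      apply/negP => /(subsetP hg); rewrite inv_lam // ha /=; by rewrite !andbF.
    rewrite inv_setP pa /= -leqNgt; done.
  lia.
have lsle : wle ls lam by apply/subsetP => p; rewrite hS' => /andP[].
have lsy : wle ls y.
  apply/subsetP => p; rewrite hS' hY' => /andP[/lx -> ->]; done.
have lsne : ls <> lam.
  move=> e; move: (hS' P); rewrite e hP eqxx /=; done.
have cov : covers lam ls.
  split; first by split.
  case=> z [[lz nz] [zl nzl]].
  case: (boolP (P \in inv_set z)) => hz.
    by apply: nzl; apply: inv_inj; apply: ji.
  apply: nz; apply: inv_inj; apply/eqP; rewrite eqEsubset lz /=.
  apply/subsetP => p hp; rewrite hS' (subsetP zl _ hp) /=.
  by apply/eqP => e; rewrite -e hp in hz.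
split.
- move=> Txy; exists ls; split => //.
  apply: (hmeet x y lam lam ls Txy).
  + split; first by apply/subsetP.
    by split; [exact: subxx | move=> d _ h].
  + split => //; split => // d dy dl.
    apply/subsetP => p hp; rewrite hS' (subsetP dl _ hp) /=.
    by move: (subsetP dy _ hp); rewrite hY' => /andP[].
- case=> g' [[[lg ng] nb] Tg].
  have hPg : P \notin inv_set g'.
    by apply/negP => hp; apply: ng; apply: inv_inj; apply: ji.
  have gls : wle g' ls.
    apply/subsetP => p hp; rewrite hS' (subsetP lg _ hp) /=.
    by apply/eqP => e; rewrite -e hp in hPg.
  case: (g' =P ls) => [e|ne]; last first.
    by exfalso; apply: nb; exists ls; split; split.
  subst g'.
  apply: (hjoin lam ls y x y Tg).
  + split; first by apply/subsetP.
    split; first by apply/subsetP => p; rewrite hY' => /andP[].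
    move=> d hl hyd; apply/subsetP => p hp.
    case: (p =P P) => [->|np]; first exact: (subsetP hl).
    by apply: (subsetP hyd); rewrite hY' hp; apply/eqP.
  + split => //; split; [exact: subxx | move=> d _ h //].
Qed.
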